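(* Let $\Sigma=(\mathbb{N}_0,X,U,\mathscr{U},\phi)$ be a control system as in the standing setup and let $Q\subset X$ be a control set. If $\mathrm{MEI}_k(Q)\cap\operatorname{Int}(Q)\ne\emptyset$ for some $k\in\mathbb N$, then $\mathrm{MEI}_k(Q)=Q$.
   Context: Standing setup: $(X,d)$ is a metric space, $U$ is a compact metric space, and $F:X\times U\to X$ is a map such that $F_u:=F(\cdot,u)$ is continuous for every $u\in U$. Let $\mathscr U=U^{\mathbb N_0}$ with the product topology. For $\omega=(\omega_0,\omega_1,\dots)\in\mathscr U$, $x\in X$, set $\phi(0,x,\omega)=x$ and $\phi(k,x,\omega)=F_{\omega_{k-1}}\circ\cdots\circ F_{\omega_0}(x)$ for $k\ge1$. It is assumed that $\phi:\mathbb N_0\times X\times\mathscr U\to X$ is continuous. Notation: $\mathbb N=\{1,2,\dots\}$; $B(x,\delta)$ is the open ball; $d(y,Q)=\inf_{q\in Q}d(y,q)$; $\operatorname{Int}(Q)$ is the interior of $Q$ in $X$. Control set: $D\subset X$ is a control set if (i) for every $x\in D$ there is $\omega\in\mathscr U$ with $\phi(k,x,\omega)\in D$ for all $k\in\mathbb N_0$; (ii) for every $x\in D$, $D\subset\operatorname{cl}\mathcal O^+(x)$, where $\mathcal O^+(x)=\{\phi(m,x,\omega):m\in\mathbb N_0,\omega\in\mathscr U\}$; (iii) $D$ is maximal with (i) and (ii). For $k\in\mathbb N$: $\mathrm{MEI}_k(Q)$ is the set of $x\in Q$ for which there exist $\delta>0$ and $\omega\in\mathscr U$ such that $\limsup_{n\to\infty}\frac1n\sum_{i=0}^{n-1}d(\phi(i,y,\omega),Q)<\frac1k$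 for all $y\in B(x,\delta)\cap Q$. *)

(* Defs.v *)
From HB Require Import structures.
From mathcomp Require Import all_boot all_order all_algebra.
From mathcomp Require Import all_classical all_reals all_analysis.
Set Implicit Arguments. Unset Strict Implicit. Unset Printing Implicit Defensive.
Import Order.TTheory GRing.Theory Num.Theory.
Local Open Scope classical_set_scope.
Local Open Scope ring_scope.

Section Defs.
Context {R : realType} {X U : metricType R}.
Variable F : X -> U -> X.

Fixpoint phi (k : nat) (x : X) (w : nat -> U) : X :=
  match k with
  | 0 => x
  | k'.+1 => F (phi k' x w) (w k')
  end.

Definition orbit_plus (x : X) : set X :=
  [set y | exists m w, y = phi m x w].

Definition ctrl_i (D : set X) : Prop :=
  forall x, D x -> exists w : nat -> U, forall k, D (phi k x w).

Definition ctrl_ii (D : set X) : Prop :=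
  forall x, D x -> D `<=` closure (orbit_plus x).

Definition control_set (D : set X) : Prop :=
  [/\ ctrl_i D, ctrl_ii D &
      forall D' : set X, D `<=` D' -> ctrl_i D' -> ctrl_ii D' -> D' = D].

Definition dist_set (y : X) (Q : set X) : R :=
  inf [set mdist y q | q in Q].

Definition avg_dist (Q : set X) (y : X) (w : nat -> U) (n : nat) : R :=
  n%:R^-1 * \sum_(0 <= i < n) dist_set (phi i y w) Q.

Definition MEI (k : nat) (Q : set X) : set X :=
  [set x | Q x /\ exists2 delta : R, 0 < delta &
     exists w : nat -> U, forall y, mdist x y < delta -> Q y ->
       (limn_esup (fun n => (avg_dist Q y w n)%:E) < (k%:R^-1)%:E)%E].

End Defs.

(* Main.v *)
Require Import Defs.
From HB Require Import structures.
From mathcomp Require Import all_boot all_order all_algebra.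
From mathcomp Require Import all_classical all_reals all_analysis.
From mathcomp Require Import zify ring lra.
Import Order.TTheory GRing.Theory Num.Theory.
Local Open Scope classical_set_scope.
Local Open Scope ring_scope.

Definition avgR {R : realType} (f : nat -> R) (n : nat) : R :=
  n%:R^-1 * \sum_(0 <= i < n) f i.

Lemma esup_bound {R : realType} (b : nat -> R) (c : R) : 0 < c ->
  (limn_esup (fun n => (avgR b n)%:E) < c%:E)%E ->
  exists N r1, [/\ 0 <= r1, r1 < c & forall n, (N <= n)%N -> avgR b n <= r1].
Proof.
rewrite /limn_esup limf_esupE => c0 /ereal_inf_lt [_ [V hV <-]] hlt.
case: hV => N _ hN.
have ub n : (N <= n)%N -> ((avgR b n)%:E <= ereal_sup [set (avgR b x)%:E | x in V])%E.
  by move=> Nn; apply: ereal_sup_ubound; exists n => //; apply: hN.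
move: hlt ub; case: (ereal_sup _) => [r| |] hlt ub.
- exists N, (Num.max r 0); split => //.
  + by rewrite le_max lexx orbT.
  + by rewrite gt_max c0 andbT -lte_fin.
  + by move=> n Nn; rewrite le_max -lee_fin (ub n Nn).
- by [].
- by exists N, 0; split => // n /ub.
Qed.

Lemma sum_shift {R : realType} (a : nat -> R) m j :
  \sum_(0 <= i < j + m) a i = \sum_(0 <= i < m) a i + \sum_(0 <= i < j) a (i + m)%N.
Proof.
rewrite (big_cat_nat _ (n := m)) //=; last by rewrite leq_addl.
congr (_ + _).
rewrite -{1}(add0n m) big_addn addnK //.
Qed.

Lemma avg_real {R : realType} (a b : nat -> R) m N r1 c (C := \sum_(0 <= i < m) a i) : 
  0 <= r1 -> r1 < c -> (forall i, a (i+m)%N = b i) ->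
  (forall n, (N <= n)%N -> avgR b n <= r1) ->
  forall n, ((N + m + (Num.Def.archi_bound (`|C| / ((c - r1)/2)))).+1 <= n)%N -> avgR a n <= r1 + (c - r1)/2.
Proof.
move=> r10 r1c hab hb n hn.
set e := (c - r1)/2.
have e0 : 0 < e by rewrite /e divr_gt0 // subr_gt0.
set M := Num.Def.archi_bound _ in hn.
have hM := @archi_boundP _ (`|C| / e) (divr_ge0 (normr_ge0 _) (ltW e0)).
rewrite -/M in hM.
pose j := (n - m)%N.
have nj : n = (j + m)%N by rewrite /j; lia.
have Nj : (N <= j)%N by rewrite /j; lia.
have j0 : (0 < j)%N by rewrite /j; lia.
have Mn : (M < n)%N by lia.
have hbj := hb j Nj.
have hsum : \sum_(0 <= i < j) b i <= j%:R * r1.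
  have -> : \sum_(0 <= i < j) b i = j%:R * (j%:R^-1 * \sum_(0 <= i < j) b i).
    by rewrite mulrA divff ?mul1r // pnatr_eq0 -lt0n.
  by rewrite ler_wpM2l.
rewrite /avgR nj sum_shift -/C.
under eq_bigr do rewrite hab.
set s := \sum_(0 <= i < j) b i in hsum *.
have n0 : 0 < (j + m)%:R :> R by rewrite ltr0n; lia.
rewrite mulrC ler_pdivrMr //.
have h1 : j%:R * r1 <= (j + m)%:R * r1 by rewrite ler_wpM2r // ler_nat leq_addr.
have h2 : `|C| < M%:R * e by rewrite -ltr_pdivrMr.
have h3 : M%:R * e <= (j+m)%:R * e by rewrite ler_wpM2r ?(ltW e0) // ler_nat; lia.
have h4 : C <= `|C| by apply: ler_norm.
have -> : (r1 + e) * (j + m)%:R = (j + m)%:R * r1 + (j + m)%:R * e by ring.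
lra.
Qed.

Lemma shift_avg {R : realType} (a b : nat -> R) m (c : R) : 0 < c ->
  (forall i, a (i+m)%N = b i) ->
  (limn_esup (fun n => (avgR b n)%:E) < c%:E)%E ->
  (limn_esup (fun n => (avgR a n)%:E) < c%:E)%E.
Proof.
move=> c0 hab /(@esup_bound _ b c c0) [N [r1 [r10 r1c hb]]].
have := @avg_real _ a b m N r1 c r10 r1c hab hb.
set K := (_ + _ + _).+1 => hK.
apply: (@le_lt_trans _ _ (r1 + (c - r1)/2)%:E); last by rewrite lte_fin; lra.
rewrite /limn_esup limf_esupE.
apply: le_trans; first (apply: ereal_inf_lbound; exists [set n | (K <= n)%N]; first by exists K).
  reflexivity.
by apply: ge_ereal_sup => _ [n hn <-]; rewrite lee_fin; apply: hK.
Qed.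

Lemma phi_ext {R : realType} {X U : metricType R} (F : X -> U -> X) m x (w w' : nat -> U) :
  (forall j, (j < m)%N -> w j = w' j) -> phi F m x w = phi F m x w'.
Proof.
elim: m => [|m IH] h //=.
rewrite IH ?h // => j hj; apply: h; exact: ltnW.
Qed.

Lemma phi_add {R : realType} {X U : metricType R} (F : X -> U -> X) i m x (w : nat -> U) :
  phi F (i + m) x w = phi F i (phi F m x w) (fun j => w (j + m)%N).
Proof. by elim: i => [|i IH] //=; rewrite IH. Qed.

Lemma phi_cont {R : realType} {X U : metricType R} (F : X -> U -> X)
  (hFu : forall u : U, continuous (fun x : X => F x u)) m (w : nat -> U) :
  continuous (fun x => phi F m x w).
Proof.
elim: m => [|m IH] x /=; first exact: cvg_id.
exact: (continuous_comp (IH x) (hFu (w m) _)).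
Qed.

Theorem mainTheorem9 (R : realType) (X U : metricType R) (F : X -> U -> X)
  (hU : compact [set: U])
  (hFu : forall u : U, continuous (fun x : X => F x u))
  (hphi : forall m : nat,
     continuous (fun p : X * {ptws nat -> U} => phi F m p.1 p.2))
  (Q : set X) (hQ : control_set F Q) (k : nat) (hk : (0 < k)%N) :
  (MEI F k Q `&` interior Q) !=set0 -> MEI F k Q = Q.
Proof.
move=> [x0 [[Qx0 [d d0 [om hom]]] ix0]].
apply/seteqP; split; first by move=> x [].
move=> y Qy; split => //.
case: hQ => _ hii _.
have cl := hii y Qy x0 Qx0.
move/nbhs_ballP: ix0 => [e e0 heQ].
pose e' := Num.min e d.
have e'0 : 0 < e' by rewrite lt_min e0 d0.
have e20 : 0 < e' / 2 by rewrite divr_gt0.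
have [z0 [[m [w' ->]] hz0]] := cl _ (nbhsx_ballx x0 _ e20).
have hc := phi_cont F hFu m w' y.
have := hc _ (nbhsx_ballx (phi F m y w') _ e20).
move/nbhs_ballP => [d' d'0 hd'].
exists d' => //.
exists (fun j => if (j < m)%N then w' j else om (j - m)%N).
move=> z hz Qz.
have hb : ball x0 e' (phi F m z w').
  have := ball_triangle hz0 (hd' z _); rewrite -splitr; apply.
  by rewrite ballEmdist.
move: hb; rewrite ballEmdist /= lt_min => /andP [he hd].
have Qp : Q (phi F m z w') by apply: heQ; rewrite ballEmdist.
have := hom _ hd Qp.
have k0 : 0 < k%:R^-1 :> R by rewrite invr_gt0 ltr0n.
apply: (@shift_avg R (fun i => dist_set (phi F i z (fun j => if (j < m)%N then w' j else om (j - m)%N)) Q)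
  (fun i => dist_set (phi F i (phi F m z w') om) Q) m _ k0).
move=> i /=; rewrite phi_add; congr (dist_set _ _).
rewrite (@phi_ext _ _ _ F m z _ w'); last by move=> j ->.
congr (phi F i _ _); apply/funext => j.
by rewrite ltnNge leq_addl /= addnK.
Qed.
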